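(* Let $n,m\in\mathbb{N}_0$ with $m\geq n-1$. Then $L_n^{(m)}(x)>0$ for all $x\in[0,1)$. Moreover $L_n^{(m)}(1)>0$ as well, provided $(n,m)\neq(1,0)$.
   Context: Generalized Laguerre polynomials: $L_n^{(\alpha)}(x)=\sum_{j=0}^n(-1)^j\binom{n+\alpha}{n-j}\frac{x^j}{j!}$. *)

(* Defs.v *)
From mathcomp Require Import all_boot all_order all_algebra.
Set Implicit Arguments. Unset Strict Implicit. Unset Printing Implicit Defensive.
Import Order.TTheory GRing.Theory Num.Theory.
Local Open Scope ring_scope.

Definition laguerre {R : realFieldType} (n alpha : nat) (x : R) : R :=
  \sum_(j < n.+1) (-1) ^+ j * ('C(n + alpha, n - j))%:R * x ^+ j / (j`!)%:R.

(* Main.v *)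
Require Import Defs.
From mathcomp Require Import all_boot all_order all_algebra.
From mathcomp Require Import ring lra zify.
Import Order.TTheory GRing.Theory Num.Theory.
Local Open Scope ring_scope.

Section S.
Variable R : realFieldType.

Definition lag_a (n m : nat) (x : R) j := ('C(n+m, n-j))%:R * x^+j / (j`!)%:R.

Lemma lagE n m x : laguerre n m x = \sum_(j < n.+1) (-1)^+j * lag_a n m x j.
Proof. by apply: eq_bigr => j _; rewrite /lag_a !mulrA. Qed.

Lemma lag_step n m x j : (j < n)%N ->
  lag_a n m x j.+1 * ((j.+1 * (m + j.+1))%:R) = lag_a n m x j * ((n-j)%:R * x).
Proof.
move=> hj.
have H : ((n - j) * 'C(n+m, n-j) = (m + j.+1) * 'C(n+m, n - j.+1))%N.
  have e : (n - j = (n - j.+1).+1)%N by lia.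
  rewrite e mul_bin_left; congr (_ * _)%N; lia.
have H' := congr1 (fun k : nat => k%:R : R) H; rewrite /= !natrM in H'.
rewrite /lag_a factS natrM exprS.
have f0 : (j`!)%:R != 0 :> R by rewrite pnatr_eq0 -lt0n fact_gt0.
have f1 : (j.+1)%:R != 0 :> R by rewrite pnatr_eq0.
have -> : ('C(n + m, n - j))%:R * x ^+ j / (j`!)%:R * ((n - j)%:R * x)
   = ((n - j)%:R * ('C(n + m, n - j))%:R) * x * x ^+ j / (j`!)%:R :> R by field.
rewrite H' natrM; field.
by rewrite f0 -(natrD _ 1 j) add1n.
Qed.

Lemma alt_split (k : nat) (a : nat -> R) :
  \sum_(j < k.+2) (-1)^+j * a j = a 0%N - a 1%N + \sum_(j < k) (-1)^+j * a j.+2.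
Proof.
rewrite big_ord_recl big_ord_recl /= expr0 expr1 mul1r mulN1r addrA.
congr (_ + _); apply: eq_bigr => i _. rewrite /bump /= !add1n !exprS mulN1r mulNr mulN1r mulNr opprK //.
Qed.

Lemma alt_ge0 (k : nat) (a : nat -> R) :
  (forall j, (j < k)%N -> 0 <= a j) -> (forall j, (j.+1 < k)%N -> a j.+1 <= a j) ->
  0 <= \sum_(j < k) (-1)^+j * a j.
Proof.
elim: k {-2}k (leqnn k) a => [|K IH] k hk a h0 h1.
  by move: hk; rewrite leqn0 => /eqP ->; rewrite big_ord0.
case: k hk h0 h1 => [|[|k]] hk h0 h1; first by rewrite big_ord0.
  by rewrite big_ord1 expr0 mul1r h0.
rewrite alt_split; apply: addr_ge0; first by rewrite subr_ge0 h1.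
apply: (IH k _ (fun j => a j.+2)) => [|j hj|j hj]; first lia.
  by apply: h0; lia.
by apply: h1; lia.
Qed.

Lemma alt_pos (k : nat) (a : nat -> R) : (0 < k)%N -> 0 < a 0%N ->
  ((1 < k)%N -> a 1%N < a 0%N) ->
  (forall j, (j < k)%N -> 0 <= a j) -> (forall j, (j.+1 < k)%N -> a j.+1 <= a j) ->
  0 < \sum_(j < k) (-1)^+j * a j.
Proof.
case: k => [|[|k]] // _ p0 p1 h0 h1.
  by rewrite big_ord1 expr0 mul1r.
rewrite alt_split.
have h2 : 0 <= \sum_(j < k) (-1)^+j * a j.+2.
  by apply: (alt_ge0 k (fun j => a j.+2)) => j hj; [apply: h0 | apply: h1]; lia.
have h3 := p1 erefl; lra.
Qed.


Lemma lag_a_ge0 n m x j : 0 <= x -> 0 <= lag_a n m x j.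
Proof. by move=> hx; rewrite /lag_a divr_ge0 ?mulr_ge0 ?exprn_ge0 ?ler0n. Qed.

Lemma lag_a_gt0 n m x j : 0 < x -> 0 < lag_a n m x j.
Proof.
move=> hx; rewrite /lag_a divr_gt0 ?mulr_gt0 ?exprn_gt0 ?ltr0n ?fact_gt0 //.
by rewrite bin_gt0; lia.
Qed.

Lemma lag_a0 n m x : 0 < lag_a n m x 0.
Proof. by rewrite /lag_a expr0 fact0 divr1 mulr1 ltr0n bin_gt0 subn0 leq_addr. Qed.

Lemma lag_dec n m x j : (n.-1 <= m)%N -> 0 <= x -> x <= 1 -> (j < n)%N ->
  lag_a n m x j.+1 <= lag_a n m x j.
Proof.
move=> hm x0 x1 hj.
have D0 : 0 < ((j.+1 * (m + j.+1))%:R : R) by rewrite ltr0n; lia.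
rewrite -(ler_pM2r D0) lag_step //.
apply: ler_wpM2l; first exact: lag_a_ge0.
have hc : ((n - j)%:R : R) <= (j.+1 * (m + j.+1))%:R by rewrite ler_nat; nia.
have hc0 : (0 : R) <= (n - j)%:R by [].
nra.
Qed.

Lemma lag_strict n m x j : (j < n)%N -> 0 < lag_a n m x j ->
  (n - j)%:R * x < (j.+1 * (m + j.+1))%:R ->
  lag_a n m x j.+1 < lag_a n m x j.
Proof.
move=> hj a0 hc.
have D0 : 0 < ((j.+1 * (m + j.+1))%:R : R) by rewrite ltr0n; lia.
rewrite -(ltr_pM2r D0) lag_step //.
by rewrite ltr_pM2l.
Qed.

End S.

Theorem proposition1 (R : realFieldType) (n m : nat) (hm : (n.-1 <= m)%N) :
  (forall x : R, 0 <= x -> x < 1 -> 0 < laguerre n m x) /\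
  ((n, m) <> (1%N, 0%N) -> 0 < laguerre n m (1 : R)).
Proof.
have gen : forall x : R, 0 <= x -> x <= 1 -> ((0 < n)%N -> n%:R * x < (m.+1)%:R) ->
    0 < laguerre n m x.
  move=> x x0 x1 hs; rewrite lagE; apply: alt_pos => //.
  - exact: lag_a0.
  - move=> h1; apply: lag_strict => //; first exact: lag_a0.
    rewrite subn0 mul1n; apply: (lt_le_trans (hs h1)); rewrite ler_nat; lia.
  - by move=> j _; apply: lag_a_ge0.
  - by move=> j hj; apply: lag_dec.
split.
  move=> x x0 x1; apply: gen => //; first exact: ltW.
  move=> n0; have hn : (n%:R : R) <= m.+1%:R by rewrite ler_nat; lia.
  have hn1 : (1 : R) <= n%:R by rewrite ler1n.
  have : n%:R * x < n%:R :> R by rewrite -[X in _ < X]mulr1 ltr_pM2l // ltr0n.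
  lra.
move=> hnm.
have [le_nm | lt_mn] := leqP n m.
  apply: gen => //; rewrite mulr1 => _; rewrite ltr_nat; lia.
have [p [-> ->]] : exists p, n = p.+2 /\ m = p.+1.
  exists (n - 2)%N; clear gen; case: n hm hnm lt_mn => [|[|n']] hm hnm lt /=; [lia | | split; lia].
  have hm0 : m = 0%N by lia. by subst.
rewrite lagE alt_split.
have e : lag_a R p.+2 p.+1 1 1 = lag_a R p.+2 p.+1 1 0.
  have := lag_step R p.+2 p.+1 1 0 erefl.
  rewrite mul1n subn0 mulr1 addn1.
  have hp : p.+2%:R != 0 :> R by rewrite pnatr_eq0.
  by move/(congr1 (fun y => y / (p.+2)%:R)); rewrite !mulfK.
rewrite e subrr add0r.
apply: (alt_pos R p.+1 (fun j => lag_a R p.+2 p.+1 1 j.+2)) => //.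
- exact: lag_a_gt0.
- move=> h1; apply: lag_strict => //; first exact: lag_a_gt0.
  rewrite mulr1 ltr_nat; lia.
- by move=> j _; apply: lag_a_ge0.
- move=> j hj; apply: lag_dec => //; lia.
Qed.
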